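(* Under the hypotheses of the preceding result (a subsystem $(B-A)X=0$ of $Eq(\mathfrak g,\mathcal E)$ with $p$ equations, $\sum_t(B_t-A_t)=(1,\dots,1)$, and a permutation $\pi$ with permutation matrix $P$ such that the first $p-1$ rows of $PB-P^+A$ are nonnegative), assume moreover that $\ell=|Con(\mathfrak g,\mathcal E)|=3$, that the row $A_{\pi(1)}$ contains exactly one entry equal to $1$, and that $G$ contains no free subgroup of rank two. Then $\tau(G)=5$.
   Context: Configurations: for $\mathfrak g=(g_1,\dots,g_n)$ and a partition $\mathcal E=\{E_1,\dots,E_m\}$ of a group $G$, a configuration is $C=(c_0,\dots,c_n)\in\{1,\dots,m\}^{n+1}$ such that some $x\in G$ has $x\in E_{c_0}$ and $g_ix\in E_{c_i}$; $Con(\mathfrak g,\mathcal E)$ is the set of configurations. $Eq(\mathfrak g,\mathcal E)$: variables $f_C$, equations $\sum_{C:\,c_j=i}f_C=\sum_{C:\,c_k=i}f_C$ ($1\le i\le m$, $0\le j,k\le n$), each written $aX=bX$ with $a,b\in\{0,1\}^\ell$ indicator vectors; a subsystem is a finite list (repetitions allowed, sides may be swapped) of such equations $A_tX=B_tX$. Row $i$ of $PM$ is row $\pi(i)$ of $M$; $P^+$ is $P$ with rows cyclically shifted up by one (rows $P_2,\dots,P_p,P_1$). Tarski number $\tau(G)$: minimum of $r+s$ over complete paradoxical decompositions, i.e. partitions $\{A_1,\dots,A_r,B_1,\dots,B_s\}$ of $G$ with $a_i,b_j\in G$ such that $\{a_iA_i\}$ and $\{b_jB_j\}$ each partition $G$.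 *)

(* Defs.v *)
From HB Require Import structures.
From mathcomp Require Import all_boot all_order all_algebra all_fingroup.
Set Implicit Arguments. Unset Strict Implicit. Unset Printing Implicit Defensive.
Import GRing.Theory Num.Theory.

Local Open Scope group_scope.

Section Defs.
Variable G : groupType.

Definition is_partition (m : nat) (E : 'I_m -> G -> Prop) : Prop :=
  forall x : G, exists! i : 'I_m, E i x.

(* C = (c_0,...,c_n) is a configuration for g = (g_1,...,g_n) (here indexed
   g 0 .. g (n-1)) and E : some x has x in E_(c_0) and g_i x in E_(c_i). *)
Definition is_config (n m : nat) (g : 'I_n -> G) (E : 'I_m -> G -> Prop)
    (C : {ffun 'I_n.+1 -> 'I_m}) : Prop :=
  exists x : G, E (C ord0) x /\ forall i : 'I_n, E (C (lift ord0 i)) (g i * x).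

(* cs : 'I_l -> configurations is an enumeration (ordering) of Con(g,E);
   in particular l = |Con(g,E)|.  Variable f_C is the coordinate cs^-1(C). *)
Definition enumerates_Con (n m l : nat) (g : 'I_n -> G) (E : 'I_m -> G -> Prop)
    (cs : 'I_l -> {ffun 'I_n.+1 -> 'I_m}) : Prop :=
  injective cs /\ (forall C, is_config g E C <-> exists k, cs k = C).

(* Indicator vector of the left-hand side sum_{C : c_j = i} f_C. *)
Definition eq_side (n m l : nat) (cs : 'I_l -> {ffun 'I_n.+1 -> 'I_m})
    (i : 'I_m) (j : 'I_n.+1) : 'I_l -> int :=
  fun k => Posz (nat_of_bool (cs k j == i)).

(* A subsystem of Eq(g,E) with p equations A_t X = B_t X : each row
   (A_t, B_t) is one of the equations of Eq(g,E) (sides possibly swapped,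
   repetitions allowed). *)
Definition is_subsystem (n m l p : nat) (cs : 'I_l -> {ffun 'I_n.+1 -> 'I_m})
    (A B : 'M[int]_(p, l)) : Prop :=
  forall t : 'I_p, exists (i : 'I_m) (j k : 'I_n.+1),
    (forall c, A t c = eq_side cs i j c) /\ (forall c, B t c = eq_side cs i k c).

(* P M for the permutation matrix P of pi : row t of P M is row pi(t) of M. *)
Definition permrows (p l : nat) (pi : {perm 'I_p}) (M : 'M[int]_(p, l)) :
    'M[int]_(p, l) := \matrix_(t, c) M (pi t) c.

(* P^+ M : rows of P M cyclically shifted up by one. *)
Definition permrows_plus (p l : nat) (pi : {perm 'I_p}) (M : 'M[int]_(p, l)) :
    'M[int]_(p, l) := \matrix_(t, c) M (pi (ordS t)) c.

Definition complete_paradoxical (r s : nat) : Prop :=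
  exists (A : 'I_r -> G -> Prop) (B : 'I_s -> G -> Prop) (a : 'I_r -> G) (b : 'I_s -> G),
    (forall x : G, exists! u : 'I_r + 'I_s,
        match u with inl i => A i x | inr j => B j x end) /\
    (forall y : G, exists! i : 'I_r, A i ((a i)^-1 * y)) /\
    (forall y : G, exists! j : 'I_s, B j ((b j)^-1 * y)).

Definition tarski_number_eq (N : nat) : Prop :=
  (exists r s, r + s = N /\ complete_paradoxical r s) /\
  (forall r s, complete_paradoxical r s -> (N <= r + s)%N).

(* Words in two letters: (false, e) is a^(+-1), (true, e) is b^(+-1);
   e = true means the inverse letter. *)
Definition letter (a b : G) (l : bool * bool) : G :=
  let x := if l.1 then b else a in if l.2 then x^-1 else x.

Definition eval_word (a b : G) (w : seq (bool * bool)) : G :=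
  foldr (fun l acc => letter a b l * acc) 1 w.

Fixpoint reduced_word (w : seq (bool * bool)) : bool :=
  match w with
  | l1 :: ((l2 :: _) as w') =>
      ~~ ((l1.1 == l2.1) && (l1.2 != l2.2)) && reduced_word w'
  | _ => true
  end.

Definition free_pair (a b : G) : Prop :=
  forall w, w != [::] -> reduced_word w -> eval_word a b w != 1.

Definition has_free_subgroup_rank2 : Prop := exists a b : G, free_pair a b.

End Defs.

(* Main.v *)
Require Import Defs.
From HB Require Import structures.
From mathcomp Require Import all_boot all_order all_algebra all_fingroup.
From Stdlib Require Import Classical Lia IndefiniteDescription.
From mathcomp Require Import zify.
Set Implicit Arguments. Unset Strict Implicit. Unset Printing Implicit Defensive.
Import GRing.Theory Num.Theory.

Section Lower.
Local Open Scope group_scope.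
Variable G : groupType.

Lemma unique2 (P : 'I_2 -> Prop) (j : 'I_2) :
  (exists! i : 'I_2, P i) -> ~ P j -> forall k, k != j -> P k.
Proof.
move=> [i [Pi _]] nPj k kj.
have ij : i != j by apply/eqP=> E; apply: nPj; rewrite -E.
suff -> : k = i by [].
apply/val_inj; move: kj ij; rewrite -!(inj_eq val_inj).
by case: i j k {Pi nPj} => [[|[|?]] ?] [[|[|?]] ?] [[|[|?]] ?].
Qed.

Lemma cp_swap r s : complete_paradoxical G r s -> complete_paradoxical G s r.
Proof.
move=> [A [B [a [b [HP [HA HB]]]]]].
exists B, A, b, a; split; [|by split].
move=> x; have [u [Hu Hun]] := HP x.
case: u Hu Hun => [i|j] Hu Hun.
- exists (inr i); split=> //; case=> [j|i'] H.
  + by have := Hun (inr j) H.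
  + by have := Hun (inl i') H; case=> ->.
- exists (inl j); split=> //; case=> [j'|i'] H.
  + by have := Hun (inr j') H; case=> ->.
  + by have := Hun (inl i') H.
Qed.

Lemma cp_ge2 r s : complete_paradoxical G r s -> (2 <= r)%N.
Proof.
move=> [A [B [a [b [HP [HA HB]]]]]].
case: r A a HP HA => [|[|r]] A a HP HA //.
- by have [[i Hi] _] := HA 1.
- have allA : forall x, A ord0 x.
    move=> x; have [i [Hi _]] := HA (a ord0 * x).
    have E : i = ord0 by apply/val_inj; case: i {Hi} => [[|]].
    by rewrite E mulKg in Hi.
  have [j [Hj _]] := HB 1.
  have [u [_ Hun]] := HP ((b j)^-1 * 1).
  have e1 := Hun (inr j) Hj.
  have e2 := Hun (inl ord0) (allA _).
  by rewrite e1 in e2.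
Qed.

Definition bi (e : bool) : 'I_2 := if e then ord_max else ord0.

Lemma bi_neq e : bi (~~ e) != bi e.
Proof. by case: e. Qed.

Lemma biK (i : 'I_2) : bi (i == ord_max) = i.
Proof. by apply/val_inj; case: i => [[|[|?]] ?]. Qed.

Lemma bi_inj : injective bi.
Proof. by case=> [] []. Qed.

Lemma nonempty_side (P Q : 'I_2 -> G -> Prop) (c d : 'I_2 -> G) :
  (forall y, exists! i, P i ((c i)^-1 * y)) ->
  (forall y, exists! j, Q j ((d j)^-1 * y)) ->
  (forall i j z, P i z -> Q j z -> False) -> forall i, exists z, P i z.
Proof.
move=> HP HQ dis i; apply: NNPP => ne.
have [i' i'i] : exists i' : 'I_2, i' != i.
  by exists (bi (i == ord0)); case: i {ne} => [[|[|?]] ?].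
have all' : forall z, P i' z.
  move=> z; have := unique2 (HP (c i' * z)) (j:=i).
  move=> H; have := H _ _ i'i; rewrite mulKg; apply.
  by move=> H'; apply: ne; exists ((c i)^-1 * (c i' * z)).
have [j [Hj _]] := HQ 1.
exact: dis (all' _) Hj.
Qed.

Lemma stepgen (P : 'I_2 -> G -> Prop) (c : 'I_2 -> G) e z :
  (forall y, exists! i, P i ((c i)^-1 * y)) -> ~ P (bi (~~ e)) z ->
  P (bi e) ((c (bi e))^-1 * c (bi (~~ e)) * z).
Proof.
move=> HP nP; have := unique2 (HP (c (bi (~~ e)) * z)) (j := bi (~~ e)).
rewrite mulKg -mulgA; apply=> //; by rewrite eq_sym bi_neq.
Qed.

Lemma pp22 : complete_paradoxical G 2 2 -> has_free_subgroup_rank2 G.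
Proof.
move=> [A [B [a [b [HP [HA HB]]]]]].
pose al := (a (bi false))^-1 * a (bi true).
pose be := (b (bi false))^-1 * b (bi true).
exists al, be.
pose T (q : bool * bool) z := if q.1 then B (bi q.2) z else A (bi q.2) z.
have disT : forall q q' z, T q z -> T q' z -> q = q'.
  move=> [g e] [g' e'] z; have [u [_ Hu]] := HP z.
  case: g; case: g' => /= H1 H2.
  - have E1 := Hu (inr (bi e)) H1; have E2 := Hu (inr (bi e')) H2.
    by rewrite E1 in E2; case: E2 => /bi_inj ->.
  - have E1 := Hu (inr (bi e)) H1; have E2 := Hu (inl (bi e')) H2.
    by rewrite E1 in E2.
  - have E1 := Hu (inl (bi e)) H1; have E2 := Hu (inr (bi e')) H2.
    by rewrite E1 in E2.
  - have E1 := Hu (inl (bi e)) H1; have E2 := Hu (inl (bi e')) H2.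
    by rewrite E1 in E2; case: E2 => /bi_inj ->.
have step : forall l z, ~ T (l.1, ~~ l.2) z -> T l (letter al be l * z).
  move=> [g e] z; rewrite /T /letter /al /be /=.
  case: g => nT.
  - have := stepgen HB nT; case: e {nT} => //=; by rewrite invMg invgK.
  - have := stepgen HA nT; case: e {nT} => //=; by rewrite invMg invgK.
have neT : forall q, exists z, T q z.
  move=> [[] e]; rewrite /T /=.
  - apply: (nonempty_side HB HA) => i j z Bz Az.
    have := disT (true, i == ord_max) (false, j == ord_max) z.
    by rewrite /T /= !biK; move/(_ Bz Az).
  - apply: (nonempty_side HA HB) => i j z Az Bz.
    have := disT (false, i == ord_max) (true, j == ord_max) z.
    by rewrite /T /= !biK; move/(_ Az Bz).
have ind : forall w l x, reduced_word (l :: w) ->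
    ~ T ((last l w).1, ~~ (last l w).2) x -> T l (eval_word al be (l :: w) * x).
  elim=> [|l' w IH] l x /=.
  - by move=> _ nT; rewrite mulg1; apply: step.
  - move=> /andP [nl red] nT; rewrite -mulgA; apply: step => Tz.
    have := disT _ _ _ Tz (IH l' x red nT).
    move: nl; case: l {Tz nT} => g e; case: l' {IH red} => g' e' /= nl [E1 E2].
    by move: nl; rewrite -E1 -E2 eqxx; case: (e).
move=> [//|l w] _ red; apply/eqP => E1.
have [q [ql qk]] : exists q : bool * bool, q != l /\ q != ((last l w).1, ~~ (last l w).2).
  case: l (last l w) {red E1} => [[] []] [[] []];
  first [by exists (false,false) | by exists (false,true) | by exists (true,false)].
have [x Tx] := neT q.
have := ind w l x red; rewrite E1 mul1g => H.
have Tl : T l x.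
  apply: H => Tx'; have := disT _ _ _ Tx Tx'; by move/eqP; rewrite (negbTE qk).
by have := disT _ _ _ Tx Tl; move/eqP; rewrite (negbTE ql).
Qed.
Lemma lower r s : ~ has_free_subgroup_rank2 G -> complete_paradoxical G r s -> (5 <= r + s)%N.
Proof.
move=> nf cp; have r2 := cp_ge2 cp; have s2 := cp_ge2 (cp_swap cp).
rewrite leqNgt; apply/negP => lt.
have er : r = 2 by lia.
have es : s = 2 by lia.
by subst; apply: nf; apply: pp22.
Qed.
End Lower.
Section Upper.
Local Open Scope group_scope.
Variable G : groupType.
Variable p' : nat.
Local Notation p := p'.+1.
Variable kap : G -> 'I_3.
Variables ab bb : nat -> 'I_3 -> bool.
Variable h : nat -> G.
Hypothesis hrow : forall t y, (t < p)%N -> bb t (kap (h t * y)) = ab t (kap y).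
Hypothesis hchain : forall t c, (t < p')%N -> ab t.+1 c -> bb t c.
Hypothesis hbeyond : forall c, ab p c = false.
Variable c0 : 'I_3.
Hypothesis ha0 : forall c, ab 0 c = (c == c0).
Definition dd t c := bb t c && ~~ ab t.+1 c.
Hypothesis hS : forall c, #|[set t : 'I_p | dd t c]| = (1 + (c == c0))%N.

Fixpoint Phi t : G := if t is t'.+1 then h t * Phi t' else h 0.

Definition V t x := bb t (kap (Phi t * x)).

Lemma V0 x : V 0 x = (kap x == c0).
Proof. by rewrite /V /= hrow // ha0. Qed.

Lemma VS t x : (t.+1 < p)%N -> V t.+1 x = ab t.+1 (kap (Phi t * x)).
Proof. by move=> lt; rewrite /V /= -mulgA hrow. Qed.

Lemma Vdec t x : (t.+1 < p)%N -> V t.+1 x -> V t x.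
Proof. by move=> lt; rewrite VS // => /hchain; apply. Qed.

Lemma Vmono s t x : (s <= t)%N -> (t < p)%N -> V t x -> V s x.
Proof.
move=> st; elim: t st => [|t IH] st tp Vt.
  by move: st; rewrite leqn0 => /eqP ->.
case: (ltngtP s t.+1) st => // [lt|-> //] _.
by apply: IH; [rewrite -ltnS | exact: ltnW | exact: Vdec].
Qed.

Definition D x t := dd t (kap (Phi t * x)).

Lemma DV x t : D x t -> V t x.
Proof. by case/andP. Qed.

Lemma noD x t : kap x != c0 -> (t < p)%N -> ~~ D x t.
Proof.
move=> ne tp; apply/negP => /DV Vt.
by have := Vmono (leq0n t) tp Vt; rewrite V0 (negbTE ne).
Qed.

Lemma exD x : kap x = c0 -> exists2 t, (t < p)%N & D x t.
Proof.
move=> e.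
suff H : forall m k, k + m = p' -> V k x -> exists2 t, (t < p)%N & D x t.
  by apply: (H p' 0) => //; rewrite V0 e.
elim=> [|m IH] k km Vk.
  rewrite addn0 in km; subst k.
  by exists p' => //; rewrite /D /dd hbeyond andbT.
case Ha : (ab k.+1 (kap (Phi k * x))).
  apply: (IH k.+1); first by rewrite addSnnS.
  have lt : (k.+1 < p)%N by lia.
  by rewrite VS.
exists k; first lia.
by rewrite /D /dd Ha andbT.
Qed.

Lemma uniqD x t t' : (t < p)%N -> (t' < p)%N -> D x t -> D x t' -> t = t'.
Proof.
wlog lt : t t' / (t <= t')%N.
  move=> W tp t'p Dt Dt'; case: (leqP t t') => le; first exact: W.
  by apply/esym; apply: W => //; apply: ltnW.
move=> tp t'p Dt Dt'; case: (ltngtP t t') lt => // lt' _.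
have := Vmono lt' t'p (DV Dt').
by rewrite VS ?(leq_ltn_trans lt' t'p) //; move: Dt; rewrite /D /dd => /andP [_ /negbTE ->].
Qed.

Lemma I2cases (j : 'I_2) : j = ord0 \/ j = ord_max.
Proof. by case: j => [[|[|?]] ?]; [left|right|]; try apply: val_inj. Qed.

Lemma upper : complete_paradoxical G 3 2.
Proof.
have [t1 [t2 [t12 S0]]] : exists t1 t2 : 'I_p, t1 != t2 /\ [set t : 'I_p | dd t c0] = [set t1; t2]%SET.
  by apply/cards2P; rewrite hS eqxx.
have dt2 : dd t2 c0.
  by have : t2 \in [set t : 'I_p | dd t c0]; [rewrite S0 !inE eqxx orbT | rewrite inE].
have dt1 : dd t1 c0.
  by have : t1 \in [set t : 'I_p | dd t c0]; [rewrite S0 !inE eqxx | rewrite inE].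
have Sc : forall c, c != c0 -> exists u : 'I_p, [set t : 'I_p | dd t c] = [set u].
  by move=> c ne; apply/cards1P; rewrite hS (negbTE ne).
have U : forall c (t t' : 'I_p), t != t2 -> t' != t2 -> dd t c -> dd t' c -> t = t'.
  move=> c t t' tn t'n dt dt'.
  have mt : t \in [set t : 'I_p | dd t c] by rewrite inE.
  have mt' : t' \in [set t : 'I_p | dd t c] by rewrite inE.
  case: (eqVneq c c0) => [e|ne].
    subst c; rewrite S0 !inE (negbTE tn) orbF in mt.
    by rewrite S0 !inE (negbTE t'n) orbF in mt'; rewrite (eqP mt) (eqP mt').
  have [u Su] := Sc _ ne; rewrite Su in mt mt'; rewrite !inE in mt mt'.
  by rewrite (eqP mt) (eqP mt').
pose ex c := [exists t : 'I_p, (t != t2) && dd t c].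
pose tau c := odflt t2 [pick t : 'I_p | (t != t2) && dd t c].
have tauP : forall c, ex c -> tau c != t2 /\ dd (tau c) c.
  move=> c /existsP [t Ht]; rewrite /tau; case: pickP => [u /andP [] //|].
  by move/(_ t); rewrite Ht.
have taueq : forall c (t : 'I_p), t != t2 -> dd t c -> tau c = t.
  move=> c t tn dt; have [] := tauP c; first by apply/existsP; exists t; rewrite tn.
  by move=> tn' dt'; apply: U tn' tn dt' dt.
have exc0 : ex c0 by apply/existsP; exists t1; rewrite t12 dt1.
exists (fun c x => if ex c then kap (Phi (tau c) * x) = c else kap x = c).
exists (fun (j : 'I_2) x => if val j == 0%N then D x t2 else ~~ dd t2 (kap x)).
exists (fun c => if ex c then Phi (tau c) else 1).
exists (fun (j : 'I_2) => if val j == 0%N then Phi t2 else 1).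
split; last split.
- move=> x.
  have notmax : ~~ dd t2 (kap x) -> kap x != c0.
    by apply: contra => /eqP ->.
  case: (eqVneq (kap x) c0) => kx.
  + have [t tp Dt] := exD kx.
    pose T := Ordinal tp.
    have Dun : forall t' : 'I_p, D x t' -> t' = T.
      by move=> t' Dt'; apply: val_inj; apply: uniqD Dt' Dt.
    case: (eqVneq T t2) => Tt2.
    * exists (inr ord0); split; first by rewrite /= -Tt2.
      move=> [c|j] /=.
      - case exc : (ex c) => H.
          have [tn _] := tauP c exc.
          have Dtc : D x (tau c) by rewrite /D H; exact: (tauP c exc).2.
          by move: tn; rewrite (Dun _ Dtc) Tt2 eqxx.
        by move: exc exc0; rewrite -H kx => ->.
      - case: (I2cases j) => -> //=.
        by rewrite kx dt2.
    * have ec : ex (kap (Phi t * x)) by apply/existsP; exists T; rewrite Tt2.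
      have tc : tau (kap (Phi t * x)) = T by apply: taueq.
      exists (inl (kap (Phi t * x))); split; first by rewrite /= ec tc.
      move=> [c|j] /=.
      - case exc : (ex c) => H.
          have Dtc : D x (tau c) by rewrite /D H; exact: (tauP c exc).2.
          by rewrite -H (Dun _ Dtc).
        by move: exc exc0; rewrite -H kx => ->.
      - case: (I2cases j) => -> /=.
          by move/Dun => E; move: Tt2; rewrite E eqxx.
        by rewrite kx dt2.
  + have nD : forall t : 'I_p, ~~ D x t by move=> t; apply: noD.
    case dtc : (dd t2 (kap x)).
    * have neex : ex (kap x) = false.
        apply/negbTE/existsP => [[t /andP [tn dt]]].
        have [u Su] := Sc _ kx.
        have m1 : t \in [set t : 'I_p | dd t (kap x)] by rewrite inE.
        have m2 : t2 \in [set t : 'I_p | dd t (kap x)] by rewrite inE.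
        rewrite Su !inE in m1; rewrite Su !inE in m2.
        by move: tn; rewrite (eqP m1) (eqP m2) eqxx.
      exists (inl (kap x)); split; first by rewrite /= neex.
      move=> [c|j] /=.
      - case exc : (ex c) => H.
          have Dtc : D x (tau c) by rewrite /D H; exact: (tauP c exc).2.
          by move: (nD (tau c)); rewrite Dtc.
        by rewrite H.
      - case: (I2cases j) => -> /=.
          by move=> Dt2; move: (nD t2); rewrite Dt2.
        by [].
    * exists (inr ord_max); split; first by [].
      move=> [c|j] /=.
      - case exc : (ex c) => H.
          have Dtc : D x (tau c) by rewrite /D H; exact: (tauP c exc).2.
          by move: (nD (tau c)); rewrite Dtc.
        have [u Su] := Sc _ kx.
        have mu : u \in [set t : 'I_p | dd t (kap x)] by rewrite Su inE.
        rewrite inE in mu.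
        have : ex (kap x).
          apply/existsP; exists u; rewrite mu andbT.
          by apply: contraFneq dtc => <-.
        by rewrite H exc.
      - case: (I2cases j) => -> //= Dt2.
        by move: (nD t2); rewrite Dt2.
- move=> y; exists (kap y); split.
    by case: (ex (kap y)); rewrite ?mulVKg ?invg1 ?mul1g.
  by move=> c; case: (ex c); rewrite ?mulVKg ?invg1 ?mul1g.
- move=> y; exists (if dd t2 (kap y) then ord0 else ord_max); split.
    by case e: (dd t2 (kap y)); rewrite /= ?invg1 ?mul1g /D ?mulVKg ?e.
  move=> j; case: (I2cases j) => -> /=; rewrite ?invg1 ?mul1g /D ?mulVKg.
    by move=> ->.
  by move/negbTE => ->.
Qed.

End Upper.
Lemma fchoice (A B : Type) (P : A -> B -> Prop) :
  (forall a, exists b, P a b) -> exists f : A -> B, forall a, P a (f a).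
Proof.
move=> H; exists (fun a => proj1_sig (constructive_indefinite_description _ (H a))).
by move=> a; case: (constructive_indefinite_description _ _).
Qed.

Section Glue.
Local Open Scope group_scope.
Variables (G : groupType) (n m l : nat) (g : 'I_n -> G) (E : 'I_m -> G -> Prop)
  (cs : 'I_l -> {ffun 'I_n.+1 -> 'I_m}).

Definition gp (j : 'I_n.+1) : G := if unlift ord0 j is Some i then g i else 1.

Lemma kappa_ex : is_partition E -> enumerates_Con g E cs ->
  exists kap : G -> 'I_l, forall x j, E (cs (kap x) j) (gp j * x).
Proof.
move=> HE [_ HC]; apply: (fchoice (P := fun x k => forall j, E (cs k j) (gp j * x))) => x.
have [f Hf] : exists f : 'I_n.+1 -> 'I_m, forall j, E (f j) (gp j * x).
  by apply: (fchoice (P := fun j i => E i (gp j * x))) => j; have [i [Hi _]] := HE (gp j * x); exists i.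
have cfg : is_config g E (finfun f).
  exists x; split.
    by rewrite ffunE; have := Hf ord0; rewrite /gp unlift_none mul1g.
  by move=> i; rewrite ffunE; have := Hf (lift ord0 i); rewrite /gp liftK.
have [k Hk] := (HC _).1 cfg.
by exists k => j; rewrite Hk ffunE.
Qed.

Variable kap : G -> 'I_l.
Hypothesis HE : is_partition E.
Hypothesis Hk : forall x j, E (cs (kap x) j) (gp j * x).

Lemma memE y j i : (cs (kap y) j == i) <-> E i (gp j * y).
Proof.
split; first by move/eqP <-.
move=> Ei; have [i' [_ U]] := HE (gp j * y).
by rewrite -(U _ Ei) (U _ (Hk y j)).
Qed.

Lemma posz_eq1 (b : bool) : (Posz b == 1%R) = b.
Proof. by case: b. Qed.

Lemma row_ok p (A B : 'M[int]_(p, l)) : is_subsystem cs A B -> forall r : 'I_p,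
  exists hr : G, forall y, (B r (kap (hr * y)) == 1%R) = (A r (kap y) == 1%R).
Proof.
move=> Hsub r; have [i [j [k [HA HB]]]] := Hsub r.
exists ((gp k)^-1 * gp j) => y; rewrite HA HB /eq_side !posz_eq1.
apply/idP/idP => /memE H; apply/memE.
  by move: H; rewrite !mulgA mulgV mul1g.
by rewrite !mulgA mulgV mul1g.
Qed.

Lemma zero_one p (A B : 'M[int]_(p, l)) : is_subsystem cs A B ->
  forall r c, A r c = Posz (A r c == 1%R) /\ B r c = Posz (B r c == 1%R).
Proof.
move=> Hsub r c; have [i [j [k [HA HB]]]] := Hsub r.
by rewrite HA HB /eq_side !posz_eq1.
Qed.
End Glue.

Lemma sum_posz (I : finType) (F : I -> nat) : (\sum_i (Posz (F i)) = Posz (\sum_i F i))%R.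
Proof. by rewrite -natz natr_sum; apply: eq_bigr => i _; rewrite natz. Qed.

Local Open Scope ring_scope.
Unset Implicit Arguments.

Theorem mainTheorem6 (G : groupType) (n m l p : nat)
    (g : 'I_n -> G) (E : 'I_m -> G -> Prop)
    (cs : 'I_l -> {ffun 'I_n.+1 -> 'I_m})
    (A B : 'M[int]_(p, l)) (pi : {perm 'I_p}) :
  is_partition E ->
  enumerates_Con g E cs ->
  is_subsystem cs A B ->
  (forall c : 'I_l, \sum_(t < p) (B t c - A t c) = 1) ->
  (forall (t : 'I_p) (c : 'I_l), (t.+1 < p)%N ->
      0 <= (permrows pi B - permrows_plus pi A) t c) ->
  l = 3%N ->
  (forall t0 : 'I_p, val t0 = 0%N -> #|[set c : 'I_l | A (pi t0) c == 1]| = 1%N) ->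
  ~ has_free_subgroup_rank2 G ->
  tarski_number_eq G 5.
Proof.
move=> HE HC Hsub Hsum Hch hl Hone nf.
subst l.
split; last by move=> r s cp; exact: (lower nf cp).
exists 3%N, 2%N; split => //.
case: p A B pi Hsub Hsum Hch Hone => [|p'] A B pi Hsub Hsum Hch Hone.
  by have := Hsum ord0; rewrite big_ord0.
have [kap Hk] := kappa_ex HE HC.
have [hf Hh] := fchoice (P := fun r hr => forall y, (B r (kap (hr * y)%g) == 1) = (A r (kap y) == 1)) (row_ok HE Hk Hsub).
have Z := zero_one Hsub.
pose ab t c := (t < p'.+1)%N && (A (pi (inord t)) c == 1).
pose bb t c := (t < p'.+1)%N && (B (pi (inord t)) c == 1).
pose h t := hf (pi (inord t)).
have [c0 Hc0] : exists c0, [set c | A (pi ord0) c == 1] = [set c0].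
  by apply/cards1P; rewrite (Hone ord0).
have ha0 : forall c, ab 0%N c = (c == c0).
  move=> c; rewrite /ab /= (_ : inord 0 = ord0); last by apply: val_inj; rewrite /= inordK.
  by have /setP/(_ c) := Hc0; rewrite !inE.
have hbeyond : forall c, ab p'.+1 c = false by move=> c; rewrite /ab ltnn.
have hrow : forall t y, (t < p'.+1)%N -> bb t (kap (h t * y)%g) = ab t (kap y).
  by move=> t y tp; rewrite /bb /ab tp /h; exact: Hh.
have hchain : forall t c, (t < p')%N -> ab t.+1 c -> bb t c.
  move=> t c tp; rewrite /ab /bb => /andP [_ Ha].
  have tp1 : (t < p'.+1)%N by apply: ltnW.
  rewrite tp1 /=.
  have := Hch (inord t) c; rewrite inordK // => /(_ tp).
  rewrite !mxE.
  have -> : ordS (inord t) = inord t.+1 :> 'I_p'.+1.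
    by apply/val_inj; rewrite /= !inordK ?modn_small.
  case: (Z (pi (inord t.+1)) c) => -> _; rewrite (eqP Ha).
  case: (Z (pi (inord t)) c) => _ ->.
  by case: (B _ _ == 1).
refine (@upper G p' kap ab bb h hrow hchain hbeyond c0 ha0 _).
move=> c.
have Hs := Hsum c.
rewrite (reindex_inj (@perm_inj _ pi)) /= in Hs.
have eA : forall t : 'I_p'.+1, A (pi t) c = Posz (ab t c).
  by move=> t; rewrite /ab ltn_ord inord_val; exact: (Z _ _).1.
have eB : forall t : 'I_p'.+1, B (pi t) c = Posz (bb t c).
  by move=> t; rewrite /bb ltn_ord inord_val; exact: (Z _ _).2.
rewrite sumrB (eq_bigr _ (fun t _ => eB t)) (eq_bigr _ (fun t _ => eA t)) !sum_posz in Hs.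
have Hn : (\sum_(t < p'.+1) (bb t c : nat) = 1 + \sum_(t < p'.+1) (ab t c : nat))%N.
  move: Hs; move: (\sum_(t < p'.+1) (bb t c : nat))%N (\sum_(t < p'.+1) (ab t c : nat))%N => X Y.
  lia.
have gb : forall t : 'I_p'.+1, ab t.+1 c -> bb t c.
  move=> t; case: (ltngtP t p') => [lt|gt|eq]; first exact: hchain.
    by move: (ltn_ord t); rewrite ltnS leqNgt gt.
  by rewrite eq hbeyond.
have eC : #|[set t : 'I_p'.+1 | dd ab bb t c]| = (\sum_(t < p'.+1) (bb t c - ab t.+1 c))%N.
  rewrite -sum1_card big_mkcond /=; apply: eq_bigr => t _; rewrite inE /dd.
  by case E1 : (ab t.+1 c); [rewrite (gb _ E1) | case: (bb t c)].
have eS : (\sum_(t < p'.+1) (bb t c - ab t.+1 c) + \sum_(t < p'.+1) (ab t.+1 c : nat) = \sum_(t < p'.+1) (bb t c : nat))%N.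
  rewrite -big_split /=; apply: eq_bigr => t _; rewrite subnK //.
  by case E1 : (ab t.+1 c); rewrite ?(gb _ E1).
have eG : (\sum_(t < p'.+1) (ab t.+1 c : nat) = \sum_(i < p') (ab i.+1 c : nat))%N.
  by rewrite big_ord_recr /= hbeyond addn0.
have eL : (\sum_(t < p'.+1) (ab t c : nat) = (c == c0) + \sum_(i < p') (ab i.+1 c : nat))%N.
  by rewrite big_ord_recl /= ha0.
rewrite eC; move: eS eG eL Hn.
move: (\sum_(t < p'.+1) (bb t c - ab t.+1 c))%N (\sum_(t < p'.+1) (ab t.+1 c : nat))%N
  (\sum_(i < p') (ab i.+1 c : nat))%N (\sum_(t < p'.+1) (ab t c : nat))%N (\sum_(t < p'.+1) (bb t c : nat))%N.
move=> *; lia.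
Qed.
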